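(* There is a polynomial $p$ such that for every $N\geq1$, every $\varepsilon,\eta\in(0,1]$ and every finite nonempty $V\subseteq\mathbb{R}^N$, there is a partition of $V$ into at most $2^{p(1/\varepsilon,1/\eta)}$ clusters such that whenever $u,v$ lie in the same cluster, there are at most $\eta|V|$ points $w\in V$ with $w\in B(u,1)\setminus B(v,1+\varepsilon)$.
   Context: $B(v,r)$ denotes the closed Euclidean ball of radius $r$ centered at $v$. The polynomial $p$ does not depend on $N$ or $V$. *)

(* Defs.v *)
From HB Require Import structures.
From mathcomp Require Import all_boot all_order all_algebra.
From mathcomp Require Import finmap.
From mathcomp Require Import all_classical all_reals exp.
Set Implicit Arguments. Unset Strict Implicit. Unset Printing Implicit Defensive.
Import Order.TTheory GRing.Theory Num.Theory.
Local Open Scope ring_scope.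

Definition edist (R : realType) (N : nat) (u v : 'rV[R]_N) : R :=
  Num.sqrt (\sum_(i < N) (u ord0 i - v ord0 i) ^+ 2).

Definition in_ball (R : realType) (N : nat) (c : 'rV[R]_N) (r : R) (w : 'rV[R]_N) : bool :=
  edist w c <= r.

Definition eval2 (R : realType) (p : {poly {poly R}}) (x y : R) : R :=
  (p.[y%:P]).[x].

(* Main.v *)
Require Import Defs.
Set Implicit Arguments. Unset Strict Implicit. Unset Printing Implicit Defensive.
From HB Require Import structures.
From mathcomp Require Import all_boot all_order all_algebra.
From mathcomp Require Import finmap.
From mathcomp Require Import all_classical all_reals exp.
From mathcomp Require Import ring lra zify.
Import Order.TTheory GRing.Theory Num.Theory.
Local Open Scope ring_scope.
Local Open Scope fset_scope.
Local Open Scope ring_scope.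
Section Vec.
Variable R : realType.
Variable N : nat.
Implicit Types u v w x y z : 'rV[R]_N.

Definition dot u v : R := \sum_(i < N) u ord0 i * v ord0 i.
Definition sq u := dot u u.

Lemma dotC u v : dot u v = dot v u.
Proof. by apply: eq_bigr => i _; rewrite mulrC. Qed.

Lemma dotDl u v w : dot (u + v) w = dot u w + dot v w.
Proof. by rewrite /dot -big_split; apply: eq_bigr => i _; rewrite !mxE mulrDl. Qed.

Lemma dotDr u v w : dot w (u + v) = dot w u + dot w v.
Proof. by rewrite dotC dotDl !(dotC w). Qed.

Lemma dotZl a u v : dot (a *: u) v = a * dot u v.
Proof. by rewrite /dot mulr_sumr; apply: eq_bigr => i _; rewrite !mxE mulrA. Qed.

Lemma dotZr a u v : dot v (a *: u) = a * dot v u.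
Proof. by rewrite dotC dotZl dotC. Qed.

Lemma dotNl u v : dot (- u) v = - dot u v.
Proof. by rewrite -scaleN1r dotZl mulN1r. Qed.

Lemma dotNr u v : dot v (- u) = - dot v u.
Proof. by rewrite dotC dotNl dotC. Qed.

Lemma dotBl u v w : dot (u - v) w = dot u w - dot v w.
Proof. by rewrite dotDl dotNl. Qed.

Lemma dotBr u v w : dot w (u - v) = dot w u - dot w v.
Proof. by rewrite dotDr dotNr. Qed.

Lemma dot0l u : dot 0 u = 0.
Proof. by rewrite /dot big1 // => i _; rewrite mxE mul0r. Qed.

Lemma dot0r u : dot u 0 = 0.
Proof. by rewrite dotC dot0l. Qed.

Lemma dot_sumr (I : Type) (r : seq I) (P : pred I) (F : I -> 'rV[R]_N) u :
  dot u (\sum_(i <- r | P i) F i) = \sum_(i <- r | P i) dot u (F i).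
Proof.
elim/big_rec2: _ => [|i y1 y2 _ <-]; first by rewrite dot0r.
by rewrite dotDr.
Qed.

Lemma dot_suml (I : Type) (r : seq I) (P : pred I) (F : I -> 'rV[R]_N) u :
  dot (\sum_(i <- r | P i) F i) u = \sum_(i <- r | P i) dot (F i) u.
Proof. by rewrite dotC dot_sumr; apply: eq_bigr => i _; rewrite dotC. Qed.

Lemma sq_ge0 u : 0 <= sq u.
Proof. by apply: sumr_ge0 => i _; rewrite -expr2 sqr_ge0. Qed.

Lemma sq0_dot u v : sq u = 0 -> dot u v = 0.
Proof.
move=> /eqP; rewrite psumr_eq0 => [/allP H|i _]; last by rewrite -expr2 sqr_ge0.
rewrite /dot big1 // => i _.
have := H i (mem_index_enum i); rewrite -expr2 sqrf_eq0 => /eqP ->.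
by rewrite mul0r.
Qed.

Lemma sqD u v : sq (u + v) = sq u + 2 * dot u v + sq v.
Proof. rewrite /sq !dotDl !dotDr (dotC v u); ring. Qed.

Lemma sqB u v : sq (u - v) = sq u - 2 * dot u v + sq v.
Proof. rewrite /sq !dotBl !dotBr (dotC v u); ring. Qed.

Lemma sqZ a u : sq (a *: u) = a ^+ 2 * sq u.
Proof. by rewrite /sq dotZl dotZr mulrA expr2. Qed.

Lemma sq_par u v : sq (u + v) <= 2 * sq u + 2 * sq v.
Proof.
move: (sq_ge0 (u - v)); rewrite sqB => H; rewrite sqD; lra.
Qed.

Lemma edistE w u : edist w u = Num.sqrt (sq (w - u)).
Proof. by rewrite /edist /sq /dot; congr Num.sqrt; apply: eq_bigr => i _; rewrite !mxE expr2. Qed.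

Lemma in_ballE u r w : 0 <= r -> in_ball u r w = (sq (w - u) <= r ^+ 2).
Proof.
move=> r0; rewrite /in_ball edistE.
apply/idP/idP => H.
  have [s0|s0] := leP 0 (sq (w - u)).
    by rewrite -(sqr_sqrtr s0) ler_pXn2r // ?nnegrE ?sqrtr_ge0.
  by apply: le_trans (ltW s0) _; rewrite sqr_ge0.
by rewrite -(ger0_norm r0) -sqrtr_sqr ler_wsqrtr.
Qed.

End Vec.
Section Ortho.
Variable R : realType.
Variable N : nat.
Implicit Types u v w x y z : 'rV[R]_N.
Implicit Types s : seq 'rV[R]_N.

Definition ortho s := forall i j, (i < size s)%N -> (j < size s)%N ->
  dot s`_i s`_j = (i == j)%:R.

Definition proj s x := \sum_(i < size s) dot x s`_i *: s`_i.

Lemma dot_proj s x y : ortho s ->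
  dot y (proj s x) = \sum_(i < size s) dot x s`_i * dot y s`_i.
Proof. by move=> o; rewrite dot_sumr; apply: eq_bigr => i _; rewrite dotZr. Qed.

Lemma sum_delta n (c : 'I_n -> R) (j : 'I_n) :
  \sum_(i < n) c i * (i == j :> nat)%:R = c j.
Proof.
rewrite (bigD1 j) //= eqxx mulr1 big1 ?addr0 // => i /negPf.
by move=> H; rewrite -val_eqE /= in H; rewrite H mulr0.
Qed.

Lemma sq_proj s x : ortho s -> sq (proj s x) = \sum_(i < size s) (dot x s`_i) ^+ 2.
Proof.
move=> o; rewrite /sq; set p := proj s x.
rewrite {1}/p /proj dot_suml; apply: eq_bigr => i _.
rewrite dotZl /p (dot_proj _ _ o).
under eq_bigr => j _ do rewrite (o _ _ (ltn_ord i) (ltn_ord j)) eq_sym.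
by rewrite sum_delta expr2.
Qed.

Lemma sq_sub_proj s x : ortho s ->
  sq (x - proj s x) = sq x - \sum_(i < size s) (dot x s`_i) ^+ 2.
Proof.
move=> o; rewrite sqB sq_proj // dot_proj //.
under eq_bigr => i _ do rewrite -expr2.
ring.
Qed.

Lemma bessel s x : ortho s -> \sum_(i < size s) (dot x s`_i) ^+ 2 <= sq x.
Proof.
move=> o; have := sq_ge0 (x - proj s x); rewrite sq_sub_proj // subr_ge0 //.
Qed.

Lemma orth_sub_proj s x j : ortho s -> (j < size s)%N ->
  dot (x - proj s x) s`_j = 0.
Proof.
move=> o js; rewrite dotBl (dotC (proj s x)) dot_proj //.
under eq_bigr => i _ do rewrite (o _ _ js (ltn_ord i)) eq_sym.
by rewrite (sum_delta (fun i : 'I_(size s) => dot x s`_i) (Ordinal js)) subrr.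
Qed.

Lemma ortho_cons s e : ortho s -> sq e = 1 ->
  (forall i, (i < size s)%N -> dot e s`_i = 0) -> ortho (e :: s).
Proof.
move=> o e1 eo [|i] [|j] //= Hi Hj.
- by rewrite eo.
- by rewrite dotC eo.
- by rewrite o.
Qed.

End Ortho.
Lemma count_natsum (T : Type) (P : pred T) (s : seq T) :
  count P s = \sum_(x <- s) (P x : nat).
Proof. by elim: s => [|x s IH]; rewrite ?big_nil ?big_cons //= IH. Qed.

Lemma countR (R : realType) (T : Type) (P : pred T) (s : seq T) :
  (count P s)%:R = \sum_(x <- s) (P x)%:R :> R.
Proof. by rewrite count_natsum natr_sum. Qed.

Lemma sqN (R : realType) N (x : 'rV[R]_N) : sq (- x) = sq x.
Proof. by rewrite /sq dotNl dotNr opprK. Qed.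

Lemma term_le_sum (R : realType) (T : eqType) (s : seq T) (F : T -> R) c :
  (forall x, 0 <= F x) -> c \in s -> F c <= \sum_(x <- s) F x.
Proof.
move=> F0; elim: s => // x s IH; rewrite in_cons big_cons => /orP[/eqP->|Hc].
  by rewrite lerDl sumr_ge0.
by apply: le_trans (IH Hc) _; rewrite lerDr.
Qed.

Section Main.
Variables (R : realType) (N : nat) (eps eta : R) (V : {fset 'rV[R]_N}).
Hypotheses (he0 : 0 < eps) (he1 : eps <= 1) (ht0 : 0 < eta) (ht1 : eta <= 1)
  (hV : V != fset0).

Definition n := #|` V|.
Lemma n_gt0 : (0 < n)%N. Proof. by rewrite /n cardfs_gt0. Qed.

Definition near1 (u w : 'rV[R]_N) := sq (w - u) <= 1.
Definition cnt u := count (near1 u) V.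
Definition heavy u := eta * n%:R < (cnt u)%:R.
Definition sep (cs : seq 'rV[R]_N) := pairwise (fun c c' => 4 < sq (c - c')) cs.
Definition Bn := (Num.truncn eta^-1).+1.

Lemma near_both w c c' : near1 c w -> near1 c' w -> sq (c - c') <= 4.
Proof.
rewrite /near1 => H1 H2.
have -> : c - c' = (w - c') + - (w - c).
  by rewrite opprB [in RHS]addrC [in RHS]addrA subrK.
apply: (le_trans (sq_par _ _)); rewrite sqN; lra.
Qed.

Lemma near_count w cs : sep cs -> (count (fun c => near1 c w) cs <= 1)%N.
Proof.
elim: cs => // c cs IH; rewrite /sep pairwise_cons => /andP[Hall Hs] /=.
case: (boolP (near1 c w)) => Hc /=; last by rewrite add0n IH.
suff -> : count (fun c => near1 c w) cs = 0%N by [].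
apply/eqP; rewrite -leqn0 leqNgt -has_count; apply/hasPn => c' Hc'.
have := allP Hall c' Hc'; apply: contraL => Hc'w.
by rewrite -leNgt (near_both Hc Hc'w).
Qed.

Lemma sum_cnt cs : sep cs -> (\sum_(c <- cs) cnt c <= n)%N.
Proof.
move=> Hs; rewrite /cnt.
under eq_bigr => c _ do rewrite count_natsum.
rewrite exchange_big /= /n -[#|` V|]/(size V) -sum1_size.
apply: leq_sum => w _; rewrite -count_natsum; exact: near_count.
Qed.

Lemma centers_size cs : all heavy cs -> sep cs -> (size cs < Bn)%N.
Proof.
move=> Hh Hs.
have H1 : (size cs)%:R * (eta * n%:R) <= \sum_(c <- cs) (cnt c)%:R :> R.
  elim: cs Hh {Hs} => [|c cs IH] /=; first by rewrite big_nil mul0r.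
  move=> /andP[Hc Hh]; rewrite big_cons -add1n natrD mulrDl mul1r.
  by apply: lerD; [exact: ltW | exact: IH].
have H2 : \sum_(c <- cs) (cnt c)%:R <= n%:R :> R.
  by rewrite -natr_sum ler_nat sum_cnt.
have n0 : 0 < n%:R :> R by rewrite ltr0n n_gt0.
suff : (size cs)%:R <= eta^-1 :> R.
  by rewrite -truncn_ge_nat ?invr_ge0 ?ltW // /Bn ltnS.
rewrite -[eta^-1]div1r ler_pdivlMr //.
have := le_trans H1 H2; rewrite mulrA => H.
by rewrite -(ler_pM2r n0) mul1r.
Qed.

Lemma centers_exist : exists cs, [/\ all heavy cs, sep cs &
  forall u, u \in V -> heavy u -> has (fun c => sq (u - c) <= 4) cs].
Proof.
suff: forall k cs, all heavy cs -> sep cs -> (Bn - size cs <= k)%N ->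
  exists cs, [/\ all heavy cs, sep cs &
  forall u, u \in V -> heavy u -> has (fun c => sq (u - c) <= 4) cs].
  by move=> /(_ Bn [::]); apply => //; rewrite subn0.
elim=> [|k IH] cs Hh Hs Hk.
  by have := centers_size Hh Hs; rewrite -subn_gt0 lt0n -leqn0 Hk.
have [Hall|] := boolP (all (fun u => heavy u ==> has (fun c => sq (u - c) <= 4) cs) V).
  by exists cs; split => // u Hu Hhu; have := allP Hall u Hu; rewrite Hhu.
move=> /allPn[u Hu]; rewrite negb_imply => /andP[Hhu Hnh].
have Hs' : sep (u :: cs).
  rewrite /sep pairwise_cons; apply/andP; split => //; apply/allP => c Hc.
  by rewrite ltNge; apply: (hasPn Hnh).
have Hh' : all heavy (u :: cs) by rewrite /= Hhu.
apply: (IH (u :: cs)) => //.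
have := centers_size Hh' Hs'; rewrite /= => Hlt.
lia.
Qed.


Lemma sum_const_seq (T : Type) (s : seq T) (c : R) : \sum_(x <- s) c = c * (size s)%:R.
Proof.
elim: s => [|x s IH]; first by rewrite big_nil mulr0.
by rewrite big_cons IH /= -add1n natrD mulrDr mulr1.
Qed.

Definition Q (cs : seq 'rV[R]_N) x :=
  \sum_(c <- cs) \sum_(w <- V | sq (w - c) <= 10) (dot (w - c) x) ^+ 2.
Definition delta := eta * eps ^+ 2 / 64.
Definition A := (Num.truncn eps^-1).+1.
Definition k0 := (640 * A ^ 2 * Bn ^ 2)%N.
Definition orthS (s : seq 'rV[R]_N) x := forall j, (j < size s)%N -> dot x s`_j = 0.
Definition goodS cs s := forall x, orthS s x -> Q cs x <= delta * n%:R * sq x.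
Definition validS cs s := ortho s /\ forall j, (j < size s)%N -> delta * n%:R < Q cs s`_j.

Lemma Q_ge0 cs x : 0 <= Q cs x.
Proof. by apply: sumr_ge0 => c _; apply: sumr_ge0 => w _; rewrite sqr_ge0. Qed.

Lemma QZ cs a x : Q cs (a *: x) = a ^+ 2 * Q cs x.
Proof.
rewrite /Q mulr_sumr; apply: eq_bigr => c _; rewrite mulr_sumr; apply: eq_bigr => w _.
by rewrite dotZr exprMn.
Qed.

Lemma energy cs s : ortho s ->
  \sum_(j < size s) Q cs s`_j <= 10 * n%:R * (size cs)%:R.
Proof.
move=> o; rewrite /Q exchange_big /=.
rewrite -(sum_const_seq cs).
apply: ler_sum => c _; rewrite exchange_big /=.
rewrite /n -[#|` V|]/(size V) -sum_const_seq big_mkcond /=.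
apply: ler_sum => w _; case: ifP => // H.
by apply: le_trans (bessel _ o) _.
Qed.

Lemma validS_size cs s : validS cs s -> (size cs < Bn)%N -> (size s < k0)%N.
Proof.
move=> [o Hq] Hcs.
have n0 : 0 < n%:R :> R by rewrite ltr0n n_gt0.
have H1 : (size s)%:R * (delta * n%:R) <= \sum_(j < size s) Q cs s`_j.
  apply: (@le_trans _ _ (\sum_(j < size s) (delta * n%:R))).
    by rewrite sumr_const card_ord mulr_natl.
  by apply: ler_sum => j _; exact: ltW (Hq _ (ltn_ord j)).
have H2 := energy cs o.
have H3 : (size cs)%:R <= Bn%:R :> R by rewrite ler_nat ltnW.
have hb : eta^-1 < Bn%:R by rewrite /Bn truncnS_gt.
have ha : eps^-1 < A%:R by rewrite /A truncnS_gt.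
have ie : 0 < eta^-1 by rewrite invr_gt0.
have ia : 0 < eps^-1 by rewrite invr_gt0.
have hb' : 1 < eta * Bn%:R.
  by rewrite -(ltr_pM2l ie) mulr1 mulrA mulVf ?gt_eqF // mul1r.
have ha' : 1 < eps * A%:R.
  by rewrite -(ltr_pM2l ia) mulr1 mulrA mulVf ?gt_eqF // mul1r.
suff : (size s)%:R < k0%:R :> R by rewrite ltr_nat.
have Hk : k0%:R = 640 * A%:R ^+ 2 * Bn%:R ^+ 2 :> R.
  by rewrite /k0 !natrM !expr2.
rewrite Hk.
have HS : (size s)%:R * (eta * eps ^+ 2) <= 640 * Bn%:R.
  have H4 : 10 * n%:R * (size cs)%:R <= 10 * n%:R * Bn%:R :> R.
    by apply: ler_wpM2l => //; rewrite mulr_ge0 // ltW.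
  have H5 : (size s)%:R * (eta * eps ^+ 2) * n%:R <= 640 * Bn%:R * n%:R.
    have := le_trans H1 (le_trans H2 H4); rewrite /delta => H; lra.
  by rewrite ler_pM2r in H5.
set S := (size s)%:R in HS *.
have S0 : 0 <= S by rewrite /S ler0n.
set a := A%:R in ha ha' *; set b := Bn%:R in hb hb' HS *.
have b0 : 0 < b by lra.
have a0 : 0 < a by nra.
have [->|Sp] := eqVneq S 0.
  by rewrite !mulr_gt0 // exprn_gt0.
have Sp' : 0 < S by rewrite lt_neqAle eq_sym Sp S0.
have X1 : S < S * (eta * b) by nra.
have Y : 1 <= (eps * a) ^+ 2 by nra.
have X2 : S * (eta * b) <= S * (eta * b) * (eps * a) ^+ 2 by nra.
have E : S * (eta * b) * (eps * a) ^+ 2 = S * (eta * eps ^+ 2) * (b * a ^+ 2).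
  by rewrite exprMn; ring.
have X3 : S * (eta * eps ^+ 2) * (b * a ^+ 2) <= 640 * b * (b * a ^+ 2).
  by rewrite ler_pM2r // mulr_gt0 // exprn_gt0.
have -> : 640 * a ^+ 2 * b ^+ 2 = 640 * b * (b * a ^+ 2) by ring.
lra.
Qed.



Lemma sq0_Q cs x : sq x = 0 -> Q cs x = 0.
Proof.
move=> H; rewrite /Q big1_seq // => c _; rewrite big1_seq // => w _.
by rewrite dotC (sq0_dot _ H) expr0n.
Qed.

Lemma greedyS cs : (size cs < Bn)%N -> exists s, validS cs s /\ goodS cs s.
Proof.
move=> Hcs.
suff: forall k s, validS cs s -> (k0 - size s <= k)%N ->
  exists s, validS cs s /\ goodS cs s.
  by move=> /(_ k0 [::]); apply => //; rewrite ?subn0 //; split => // i j.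
elim=> [|k IH] s Hv Hk.
  by have := validS_size Hv Hcs; rewrite -subn_gt0 lt0n -leqn0 Hk.
have [[x [Ho Hx]]|Hno] := pselect (exists x, orthS s x /\ delta * n%:R * sq x < Q cs x);
  last first.
  exists s; split => // x Ho; rewrite leNgt; apply/negP => Hx.
  by apply: Hno; exists x.
have sx0 : 0 < sq x.
  rewrite lt_neqAle sq_ge0 andbT eq_sym; apply/eqP => H0.
  by move: Hx; rewrite H0 sq0_Q // mulr0 ltxx.
set r := Num.sqrt (sq x).
have r0 : 0 < r by rewrite /r sqrtr_gt0.
have rr : r ^+ 2 = sq x by rewrite /r sqr_sqrtr // ltW.
set e := r^-1 *: x.
have e1 : sq e = 1 by rewrite /e sqZ -rr exprVn mulVf // expf_neq0 // gt_eqF.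
have eo : forall i, (i < size s)%N -> dot e s`_i = 0.
  by move=> i Hi; rewrite /e dotZl Ho // mulr0.
have Qe : delta * n%:R < Q cs e.
  rewrite /e QZ exprVn rr.
  by rewrite -(ltr_pM2l sx0) [X in _ < X]mulrA mulfV ?gt_eqF // mul1r mulrC.
have Hv' : validS cs (e :: s).
  case: Hv => o Hq; split; first exact: ortho_cons.
  by case=> [|j] //= Hj; apply: Hq.
apply: (IH (e :: s)) => //.
have := validS_size Hv' Hcs; rewrite /= => Hlt.
lia.
Qed.


Lemma subr_mid (a b c : 'rV[R]_N) : a - b = (a - c) - (b - c).
Proof. by rewrite opprB addrA subrK. Qed.

Definition m := eps / (9 * (k0.+1)%:R).

Lemma m_gt0 : 0 < m.
Proof. by rewrite /m divr_gt0 // mulr_gt0 // ltr0n. Qed.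

Lemma m_k0 : m * (1 + 8 * k0%:R) <= eps.
Proof.
rewrite /m mulrAC ler_pdivrMr ?mulr_gt0 ?ltr0n // ler_pM2l //.
have : 0 <= k0%:R :> R by rewrite ler0n.
by rewrite -(addn1 k0) natrD; lra.
Qed.

Lemma dot_sq_le (s : seq 'rV[R]_N) (x : 'rV[R]_N) j : ortho s -> (dot x s`_j) ^+ 2 <= sq x.
Proof.
move=> o; have [Hj|Hj] := ltnP j (size s).
  apply: le_trans (bessel x o).
  rewrite (bigD1 (Ordinal Hj)) //= lerDl sumr_ge0 // => i _; exact: sqr_ge0.
by rewrite nth_default // dot0r expr0n sq_ge0.
Qed.

Lemma core (s : seq 'rV[R]_N) (c u v w : 'rV[R]_N) : ortho s -> (size s <= k0)%N ->
  sq (u - c) <= 4 -> sq (v - c) <= 4 ->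
  (forall j, (j < size s)%N -> `|dot (v - c) s`_j - dot (u - c) s`_j| < m) ->
  `|sq (v - c) - sq (u - c)| < m ->
  sq (w - u) <= 1 -> (1 + eps) ^+ 2 < sq (w - v) ->
  sq (w - c) <= 10 /\
  eps ^+ 2 / 4 < (dot (w - c) ((v - c - (u - c)) - proj s (v - c - (u - c)))) ^+ 2.
Proof.
move=> o ss hx hy hj hr hwu hwv.
set x := u - c in hx hj hr *; set y := v - c in hy hj hr *; set z := w - c.
set d := y - x; set dp := d - proj s d.
have ez : z = (w - u) + x by rewrite /z /x addrA subrK.
have hz : sq z <= 10.
  by rewrite ez; apply: (le_trans (sq_par _ _)); lra.
split => //.
have Ewu : w - u = z - x by rewrite /z /x -subr_mid.
have Ewv : w - v = z - y by rewrite /z /y -subr_mid.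
rewrite Ewu sqB in hwu; rewrite Ewv sqB in hwv.
have Ed : dot z y - dot z x = dot z (proj s d) + dot z dp.
  by rewrite /dp (dotBr d (proj s d) z) /d (dotBr y x z); ring.
have HP : `|dot z (proj s d)| <= k0%:R * (m * 4).
  rewrite dot_proj //; apply: (le_trans (ler_norm_sum _ _ _)).
  apply: (@le_trans _ _ (\sum_(i < size s) (m * 4))).
    apply: ler_sum => i _; rewrite normrM; apply: ler_pM => //.
      by rewrite /d dotBl ltW // hj.
    have := dot_sq_le z i o; move: (dot z s`_i) => t Ht.
    have Ht' : t ^+ 2 <= 10 by lra.
    by rewrite ler_norml; apply/andP; split; nra.
  rewrite sumr_const card_ord mulr_natl -[m * 4 *+ size s]mulr_natr -[m * 4 *+ k0]mulr_natr.
  rewrite ler_pM2l; first by rewrite ler_nat.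
  by rewrite mulr_gt0 // m_gt0.
have Hm := m_k0.
have m0 := m_gt0.
set P := dot z (proj s d) in Ed HP; set D := dot z dp.
move: hr HP; rewrite !ler_norml !ltr_norml => /andP[hr1 hr2] /andP[hp1 hp2].
have hD : D < - (eps / 2).
  have E2 : (1 + eps) ^+ 2 = 1 + 2 * eps + eps ^+ 2 by ring.
  rewrite E2 in hwv.
  have Hk : 0 <= k0%:R :> R by rewrite ler0n.
  have eps2 : 0 <= eps ^+ 2 by rewrite sqr_ge0.
  rewrite /D; lra.
have hD' : eps / 2 < - D by lra.
have : (eps / 2) ^+ 2 < (- D) ^+ 2.
  nra.
by rewrite sqrrN expr_div_n; lra.
Qed.


Definition Mp := (54 * k0.+1 * A)%N.
Definition KT := option ('I_Bn * {ffun 'I_k0 -> 'I_Mp.+1} * 'I_Mp.+1)%type.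
Definition bucket (t : R) := Num.truncn ((t + 2) / m).
Definition ci (cs : seq 'rV[R]_N) u := find (fun c => sq (u - c) <= 4) cs.
Definition cu (cs : seq 'rV[R]_N) u := nth 0 cs (ci cs u).
Definition key cs (s : seq 'rV[R]_N) u : KT :=
  if (u \in V) && heavy u then
    Some (inord (ci cs u),
          [ffun j : 'I_k0 => inord (bucket (dot (u - cu cs u) s`_j))],
          inord (bucket (sq (u - cu cs u))))
  else None.

Lemma bucket_lt t : -2 <= t <= 4 -> (bucket t < Mp.+1)%N.
Proof.
move=> /andP[t1 t2]; have m0 := m_gt0.
have X0 : 0 <= (t + 2) / m.
  by rewrite divr_ge0 ?(ltW m0) //; lra.
rewrite /bucket truncn_lt_nat // ltr_pdivrMr //.
have ha : eps^-1 < A%:R by rewrite /A truncnS_gt.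
have ha' : 1 < eps * A%:R.
  have ia : 0 < eps^-1 by rewrite invr_gt0.
  by rewrite -(ltr_pM2l ia) mulr1 mulrA mulVf ?gt_eqF // mul1r.
have K0 : 0 < (k0.+1)%:R :> R by rewrite ltr0n.
have E : Mp%:R * m = 6 * (eps * A%:R).
  rewrite /Mp /m !natrM; field; rewrite gt_eqF //.
have : Mp%:R * m <= Mp.+1%:R * m.
  by rewrite ler_pM2r // ler_nat.
lra.
Qed.

Lemma bucket_close t t' : -2 <= t -> -2 <= t' -> bucket t = bucket t' ->
  `|t' - t| < m.
Proof.
move=> t0 t0' Heq; have m0 := m_gt0.
have X0 : 0 <= (t + 2) / m.
  by rewrite divr_ge0 ?(ltW m0) //; lra.
have X0' : 0 <= (t' + 2) / m.
  by rewrite divr_ge0 ?(ltW m0) //; lra.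
have := truncn_itv X0; have := truncn_itv X0'.
rewrite /bucket in Heq; rewrite Heq.
move: (Num.truncn _) => b /andP[h1 h2] /andP[h3 h4].
set X := (t + 2) / m in X0 h3 h4; set X' := (t' + 2) / m in X0' h1 h2.
have et : t = X * m - 2 by rewrite /X mulfVK ?gt_eqF //; ring.
have et' : t' = X' * m - 2 by rewrite /X' mulfVK ?gt_eqF //; ring.
rewrite et et' ltr_norml -natr1 in h2 h4 *.
apply/andP; split; nra.
Qed.


Lemma dot_range (s : seq 'rV[R]_N) x j : ortho s -> sq x <= 4 -> -2 <= dot x s`_j <= 2.
Proof.
move=> o hx; have := dot_sq_le x j o; move: (dot x s`_j) => t Ht.
by apply/andP; split; nra.
Qed.

Lemma inord_inj k a b : (a < k.+1)%N -> (b < k.+1)%N ->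
  (inord a : 'I_k.+1) = inord b -> a = b.
Proof. by move=> ha hb /(congr1 val); rewrite /= !inordK. Qed.

Lemma pair_bound cs s : all heavy cs -> sep cs ->
  (forall u, u \in V -> heavy u -> has (fun c => sq (u - c) <= 4) cs) ->
  validS cs s -> goodS cs s ->
  forall u v, u \in V -> v \in V -> key cs s u = key cs s v ->
  (count (fun w => in_ball u 1 w && ~~ in_ball v (1 + eps) w) V)%:R
     <= eta * n%:R.
Proof.
move=> Hh Hs Hcov Hv Hg u v uV vV Hk.
have Hcs := centers_size Hh Hs.
have sk := validS_size Hv Hcs.
have [o _] := Hv.
have [Hu|Hu] := boolP (heavy u); last first.
  apply: le_trans (_ : (cnt u)%:R <= _); last by rewrite leNgt.
  rewrite ler_nat; apply: sub_count => w /andP[H _].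
  by move: H; rewrite in_ballE ?ler01 // expr1n.
have Hv' : heavy v.
  by apply/negPn/negP => Hnv; move: Hk; rewrite /key uV vV Hu (negPf Hnv).
move: Hk; rewrite /key uV vV Hu Hv' /= => -[e1 e2 e3].
have hu := Hcov u uV Hu; have hv := Hcov v vV Hv'.
have ciu : (ci cs u < size cs)%N by rewrite /ci -has_find.
have civ : (ci cs v < size cs)%N by rewrite /ci -has_find.
have ecuv : ci cs u = ci cs v.
  by apply: inord_inj e1; rewrite /Bn in Hcs; apply: ltn_trans Hcs.
have hcu : sq (u - cu cs u) <= 4 by exact: (nth_find 0 hu).
have hcv : sq (v - cu cs v) <= 4 by exact: (nth_find 0 hv).
have ecu : cu cs v = cu cs u by rewrite /cu ecuv.
rewrite ecu in e2 e3 hcv.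
set c := cu cs u in e2 e3 hcu hcv.
have cin : c \in cs by rewrite /c /cu mem_nth.
set d := v - c - (u - c).
set dp := d - proj s d.
have hj : forall j, (j < size s)%N ->
    `|dot (v - c) s`_j - dot (u - c) s`_j| < m.
  move=> j Hj; have Hj' : (j < k0)%N by apply: ltn_trans sk.
  have := congr1 (fun f : {ffun 'I_k0 -> 'I_Mp.+1} => f (Ordinal Hj')) e2; rewrite !ffunE /= => E.
  have /andP[a1 a2] := dot_range j o hcu; have /andP[b1 b2] := dot_range j o hcv.
  apply: bucket_close => //; apply: inord_inj E; apply: bucket_lt; apply/andP; split;
    by lra.
have hr : `|sq (v - c) - sq (u - c)| < m.
  have s1 := sq_ge0 (u - c); have s2 := sq_ge0 (v - c).
  apply: bucket_close; [lra|lra|].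
  by apply: inord_inj e3; apply: bucket_lt; apply/andP; split; lra.
have Hsub : subpred (fun w => in_ball u 1 w && ~~ in_ball v (1 + eps) w)
   (fun w => (sq (w - c) <= 10) && (eps ^+ 2 / 4 < (dot (w - c) dp) ^+ 2)).
  move=> w /andP[H1 H2].
  rewrite in_ballE ?ler01 // expr1n in H1.
  have H2' : (1 + eps) ^+ 2 < sq (w - v).
    move: H2; rewrite in_ballE; first by rewrite ltNge.
    by rewrite addr_ge0 // ltW.
  have [] := core o (ltnW sk) hcu hcv hj hr H1 H2'.
  by move=> -> ->.
apply: le_trans (_ : (count (fun w => (sq (w - c) <= 10) &&
   (eps ^+ 2 / 4 < (dot (w - c) dp) ^+ 2)) V)%:R <= _).
  by rewrite ler_nat sub_count.
have e0 : 0 < eps ^+ 2 by rewrite exprn_gt0.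
rewrite countR.
apply: (@le_trans _ _ ((\sum_(w <- V | sq (w - c) <= 10) (dot (w - c) dp) ^+ 2)
   * (4 / eps ^+ 2))).
  rewrite mulr_suml [X in _ <= X]big_mkcond /=; apply: ler_sum => w _.
  case: (boolP (sq (w - c) <= 10)) => H10 /=; last by [].
  case: (boolP (eps ^+ 2 / 4 < dot (w - c) dp ^+ 2)) => H /=.
    2: by rewrite mulr_ge0 ?sqr_ge0 ?divr_ge0 ?ltW.
  rewrite mulrA ler_pdivlMr // mul1r.
  by move: H; rewrite ltr_pdivrMr //; lra.
have hq : \sum_(w <- V | sq (w - c) <= 10) (dot (w - c) dp) ^+ 2 <= Q cs dp.
  apply: (term_le_sum (F := fun c => \sum_(w <- V | sq (w - c) <= 10)
     (dot (w - c) dp) ^+ 2)) => // c'.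
  by apply: sumr_ge0 => w _; rewrite sqr_ge0.
have hg : Q cs dp <= delta * n%:R * sq dp.
  by apply: Hg => j Hj; rewrite /dp orth_sub_proj.
have hdp : sq dp <= 16.
  rewrite /dp sq_sub_proj //.
  have : sq d <= 16.
    rewrite /d; apply: (le_trans (sq_par _ _)); rewrite sqN; lra.
  have : 0 <= \sum_(i < size s) dot d s`_i ^+ 2.
    by apply: sumr_ge0 => i _; rewrite sqr_ge0.
  lra.
have n0 : 0 <= n%:R :> R by rewrite ler0n.
have hd0 : 0 <= delta by rewrite /delta divr_ge0 // mulr_ge0 ?ltW // sqr_ge0.
have h4 : 0 < 4 / eps ^+ 2 by rewrite divr_gt0.
apply: le_trans (_ : delta * n%:R * 16 * (4 / eps ^+ 2) <= _).
  rewrite ler_pM2r //; apply: (le_trans hq); apply: (le_trans hg).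
  by rewrite ler_wpM2l // mulr_ge0.
rewrite /delta le_eqVlt; apply/orP; left; apply/eqP; field; rewrite gt_eqF //.
Qed.


Definition Eb := (Bn + Mp.+1 * k0.+1).+1.

Lemma card_KT : (#|{: KT}| <= 2 ^ Eb)%N.
Proof.
rewrite /KT card_option card_prod card_prod card_ffun !card_ord /Eb.
have h1 : (Bn < 2 ^ Bn)%N by apply: ltn_expl.
have h2 : (Mp.+1 < 2 ^ Mp.+1)%N by apply: ltn_expl.
have h3 : (Mp.+1 ^ k0 * Mp.+1 <= 2 ^ (Mp.+1 * k0.+1))%N.
  by rewrite expnM -expnSr leq_exp2r // ltnW.
rewrite expnS expnD.
have : (Bn * (Mp.+1 ^ k0 * Mp.+1) <= 2 ^ Bn * 2 ^ (Mp.+1 * k0.+1))%N.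
  by apply: leq_mul; [exact: ltnW | exact: h3].
have : (0 < 2 ^ Bn * 2 ^ (Mp.+1 * k0.+1))%N by rewrite muln_gt0 !expn_gt0.
rewrite -mulnA.
move: (Bn * _)%N (2 ^ Bn * _)%N => X Y; lia.
Qed.

Definition Cst := (55 * 641 * 641 + 2)%N.

Lemma main_sec : exists (K : nat) (cl : 'rV[R]_N -> 'I_K),
  (K <= 2 ^ Eb)%N /\
  (forall u v, u \in V -> v \in V -> cl u = cl v ->
    (count (fun w => in_ball u 1 w && ~~ in_ball v (1 + eps) w) V)%:R
       <= eta * n%:R).
Proof.
have [cs [Hh Hs Hcov]] := centers_exist.
have [s [Hv Hg]] := greedyS (centers_size Hh Hs).
exists #|{: KT}|, (fun u => enum_rank (key cs s u)); split; first exact: card_KT.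
move=> u v uV vV /enum_rank_inj Hk.
exact: pair_bound Hh Hs Hcov Hv Hg u v uV vV Hk.
Qed.


Lemma Eb_bound : (Eb <= Cst * (A * Bn) ^ 5)%N.
Proof.
rewrite /Eb /Mp /k0 /Cst.
have hA : (1 <= A)%N by [].
have hB : (1 <= Bn)%N by [].
move: A Bn hA hB => a b ha hb.
have hP1 : (1 <= a * b)%N by rewrite muln_gt0 ha hb.
have hbP : (b <= a * b)%N by rewrite leq_pmull.
have haP : (a <= a * b)%N by rewrite leq_pmulr.
rewrite -[(640 * a ^ 2 * b ^ 2)%N]mulnA -expnMn.
move: (a * b)%N hP1 hbP haP => P hP1 hbP haP.
have h2 : (1 <= P ^ 2)%N by rewrite expn_gt0 hP1.
have h5 : (P <= P ^ 5)%N by rewrite expnS leq_pmulr // expn_gt0 hP1.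
have e3 : (P ^ 2 * P = P ^ 3)%N by rewrite -expnSr.
have e5 : (P ^ 3 * P ^ 2 = P ^ 5)%N by rewrite -expnD.
have h3 : (1 <= P ^ 3)%N by rewrite expn_gt0 hP1.
have hk : ((640 * P ^ 2).+1 <= 641 * P ^ 2)%N.
  move: (P ^ 2)%N h2 => Q hQ; lia.
have hM1 : (54 * (640 * P ^ 2).+1 * a <= 54 * 641 * P ^ 3)%N.
  rewrite -e3 mulnA; apply: leq_mul => //; rewrite -mulnA leq_mul2l /=; exact: hk.
have hM : ((54 * (640 * P ^ 2).+1 * a).+1 <= 55 * 641 * P ^ 3)%N.
  move: (54 * _ * a)%N (P ^ 3)%N hM1 h3 => X Y; lia.
have hMk := leq_mul hM hk.
have e55 : (55 * 641 * P ^ 3 * (641 * P ^ 2) = 55 * 641 * 641 * P ^ 5)%N.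
  by rewrite -e5; ring.
rewrite e55 in hMk.
move: ((54 * _ * a).+1 * _)%N (P ^ 5)%N hMk h5 => X Y; lia.
Qed.

End Main.

Lemma A_le (R : realType) (x : R) : 1 <= x -> ((Num.truncn x).+1)%:R <= 2 * x.
Proof.
move=> hx; have H : (Num.truncn x)%:R <= x by rewrite truncn_le; lra.
by rewrite -natr1; lra.
Qed.


Lemma fin_bound (R : realType) (K E C P : nat) (x : R) :
  (K <= 2 ^ E)%N -> (E <= C * P ^ 5)%N -> (0 < C)%N -> 0 <= x -> P%:R <= 4 * x ->
  K%:R <= 2 `^ (C%:R * 4 ^+ 5 * x ^+ 5).
Proof.
move=> HK HE C0 x0 hP.
have hP5 : ((P ^ 5)%N)%:R <= (4 * x) ^+ 5 :> R.
  rewrite natrX lerXn2r // nnegrE ?ler0n //; nra.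
apply: (@le_trans _ _ (2 `^ E%:R)).
  by rewrite powR_mulrn // -natrX ler_nat.
apply: ler_powR; first by lra.
apply: (@le_trans _ _ ((C * P ^ 5)%N)%:R); first by rewrite ler_nat.
rewrite natrM -mulrA ler_pM2l ?ltr0n //.
by apply: (le_trans hP5); rewrite exprMn.
Qed.
Local Open Scope fset_scope.

Theorem lemmaA2 (R : realType) :
  exists p : {poly {poly R}},
  forall (N : nat) (eps eta : R) (V : {fset 'rV[R]_N}),
    (0 < N)%N ->
    0 < eps -> eps <= 1 -> 0 < eta -> eta <= 1 ->
    V != fset0 ->
    exists (K : nat) (cl : 'rV[R]_N -> 'I_K),
      (K%:R <= (2 : R) `^ (eval2 p (eps^-1) (eta^-1))) /\
      (forall u v, u \in V -> v \in V -> cl u = cl v ->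
         (#|` [fset w in V | in_ball u 1 w && ~~ in_ball v (1 + eps) w]|%:R
            <= eta * (#|` V|)%:R)).
Proof.
pose c : R := Cst%:R * 4 ^+ 5.
exists ((c%:P)%:P * (('X%:P) * 'X) ^+ 5).
move=> N eps eta V hN he0 he1 ht0 ht1 hV.
have [K [cl [HK Hcl]]] := main_sec he0 he1 ht0 ht1 hV.
exists K, cl; split; last first.
  move=> u v uV vV Huv; rewrite card_imfset //= size_filter; exact: Hcl.
have E1 : eval2 ((c%:P)%:P * (('X%:P) * 'X) ^+ 5) eps^-1 eta^-1
    = c * (eps^-1 * eta^-1) ^+ 5.
  by rewrite /eval2 !hornerE.
rewrite E1.
have HE := @Eb_bound R N eps eta V he0 he1 ht0 ht1 hV.
have a1 : 1 <= eps^-1 by rewrite invf_ge1.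
have b1 : 1 <= eta^-1 by rewrite invf_ge1.
have hA : (A eps)%:R <= 2 * eps^-1 :> R := A_le a1.
have hB : (Bn eta)%:R <= 2 * eta^-1 :> R := A_le b1.
have hP : ((A eps * Bn eta)%N)%:R <= 4 * (eps^-1 * eta^-1) :> R.
  rewrite natrM (_ : 4 * (eps^-1 * eta^-1) = (2 * eps^-1) * (2 * eta^-1)); last by ring.
  by apply: ler_pM => //; rewrite ler0n.
have C0 : (0 < Cst)%N by rewrite /Cst; apply: ltn_addl.
apply: (fin_bound HK HE C0 _ hP).
by rewrite mulr_ge0 // invr_ge0 ltW.
Qed.
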